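(* Consider a run of \textsc{1-2-MinGreedy} on a finite simple undirected graph $G=(V,E)$ producing $M$, and a maximum matching $M^*$ such that each component of $(V,M\cup M^* )$ with an edge is an edge of $M\cap M^*$ or an $M$-$M^*$-path. Let $X$ be an $M$-$M^*$-path created in the step in which $u$ is matched with $v$, and assume that a degree-1 endpoint exists after creation of $X$. Then the node $u'$ selected by the algorithm in the next step is either (a) an $M^*$-neighbor of $u$ or $v$ in $X$, or (b) a neighbor of $u$ or $v$ via an edge of $F$ that belongs to a component $Y\neq X$ of $(V,M\cup M^* )$.
   Context: \textsc{1-2-MinGreedy}: starting with $M=\emptyset$ and until no edges remain in the current graph, if every node has current degree at least $3$ select an arbitrary edge $\{u,v\}$ (call $u$ the selected node), otherwise select an arbitrary node $u$ of minimum non-zero current degree and an arbitrary neighbor $v$; add $\{u,v\}$ to $M$ and remove all edges incident with $u$ or $v$. An $M$-$M^*$-path is a component of $(V,M\cup M^* )$ that is an alternating path starting and ending with an $M^*$-edge, with $m\geq1$ edges of $M$ and $m+1$ edges of $M^*$; its endpoints are its two $M$-uncovered end nodes. The creation step of $X$ is the step in which the first $M$-edge of $X$ is picked. $F=E\setminus(M\cup M^* )$. For an endpoint $w$, an edge $\{v,w\}\in F$ is a transfer from $v$ to $w$ if, in the step in which $v$ is matched, the current degree of $w$ drops to at most $1$; such a transfer is canceled if at the moment $w$ has current degree $1$ with the single remaining edge $\{v,w\}\in F$, $w$ is already the target of two transfers from nodes matched earlier. A debit is a non-canceled transfer. A degree-1 endpoint exists after creation of $X$ if $u$ or $v$ pays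 a debit to some endpoint $w$ and $w$ has current degree exactly $1$ immediately after the creation step. *)

(* Defs.v *)
From mathcomp Require Import all_boot.
Set Implicit Arguments. Unset Strict Implicit. Unset Printing Implicit Defensive.

Section OneTwoMinGreedy.
Variable V : finType.

Definition simple_graph (adj : rel V) := symmetric adj /\ irreflexive adj.

Definition edges (adj : rel V) : {set {set V}} :=
  [set e : {set V} | [exists x, exists y, adj x y && (e == [set x; y])]].

Definition is_matching (adj : rel V) (N : {set {set V}}) :=
  N \subset edges adj /\
  (forall e1 e2, e1 \in N -> e2 \in N -> e1 != e2 -> [disjoint e1 & e2]).

Definition maximum_matching (adj : rel V) (N : {set {set V}}) :=
  is_matching adj N /\ (forall N', is_matching adj N' -> #|N'| <= #|N|).

(* A run of the algorithm is the sequence s of picked pairs (u_j, v_j),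
   u_j being the selected node of step j (steps numbered 0, 1, ...).
   [covered s j x]: x is matched in one of the first j steps. *)
Definition covered (s : seq (V * V)) (j : nat) (x : V) : bool :=
  has (fun p : V * V => (p.1 == x) || (p.2 == x)) (take j s).

Definition present (adj : rel V) (s : seq (V * V)) (j : nat) (x y : V) : bool :=
  [&& adj x y, ~~ covered s j x & ~~ covered s j y].

(* current degree of w before step j (= after j steps) *)
Definition cdeg (adj : rel V) (s : seq (V * V)) (j : nat) (w : V) : nat :=
  #|[set y | present adj s j w y]|.

Definition step_ok (adj : rel V) (s : seq (V * V)) (j : nat) (uv : V * V) : bool :=
  present adj s j uv.1 uv.2 &&
  ([exists w, 0 < cdeg adj s j w < 3] ==>
     ((0 < cdeg adj s j uv.1) &&
      [forall w, (0 < cdeg adj s j w) ==> (cdeg adj s j uv.1 <= cdeg adj s j w)])).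

Definition is_run (adj : rel V) (s : seq (V * V)) :=
  (forall j d, j < size s -> step_ok adj s j (nth d s j)) /\
  (forall x y, ~~ present adj s (size s) x y).

Definition matching_of (s : seq (V * V)) : {set {set V}} :=
  [set [set p.1; p.2] | p : V * V in s].

Definition matched_at (s : seq (V * V)) (j : nat) (x : V) : bool :=
  covered s j.+1 x && ~~ covered s j x.

Definition hadj (M Ms : {set {set V}}) : rel V :=
  fun x y => [set x; y] \in M :|: Ms.

Fixpoint alt (M Ms : {set {set V}}) (b : bool) (x : V) (r : seq V) : bool :=
  if r is y :: r' then
    ([set x; y] \in (if b then Ms else M)) && alt M Ms (~~ b) y r'
  else true.

(* p = [x_0; ...; x_{2m+1}] is (the node sequence of) a component of
   (V, M ∪ M* ) which is an alternating path starting and ending with an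
   M*-edge, with m >= 1 edges of M: the nodes are distinct, the consecutive
   edges alternate M*, M, ..., M*, and every (M ∪ M* )-edge at a node of p
   joins two consecutive nodes of p (so the node set of p is a whole
   component and carries no further edges). *)
Definition is_MMpath (M Ms : {set {set V}}) (p : seq V) : bool :=
  match p with
  | [::] => false
  | x :: r =>
    [&& uniq p, odd (size r), 3 <= size r, alt M Ms true x r &
     [forall a, forall b, ((a \in p) && hadj M Ms a b) ==>
        ((b \in p) && ((index b p == (index a p).+1) ||
                       (index a p == (index b p).+1)))]]
  end.

Definition is_endpoint (M Ms : {set {set V}}) (w : V) :=
  exists p, is_MMpath M Ms p /\ (w = head w p \/ w = last w p).

Definition Fedges (adj : rel V) (M Ms : {set {set V}}) : {set {set V}} :=
  edges adj :\: (M :|: Ms).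

Definition transfer_at (adj : rel V) (s : seq (V * V)) (Ms : {set {set V}})
    (v w : V) (j : nat) :=
  is_endpoint (matching_of s) Ms w /\
  [set v; w] \in Fedges adj (matching_of s) Ms /\
  matched_at s j v /\
  cdeg adj s j.+1 w <= 1 /\ cdeg adj s j.+1 w < cdeg adj s j w.

Definition canceled_at (adj : rel V) (s : seq (V * V)) (Ms : {set {set V}})
    (v w : V) (j : nat) :=
  transfer_at adj s Ms v w j /\
  cdeg adj s j w = 1 /\ present adj s j w v /\
  exists v1 v2 j1 j2, v1 != v2 /\ j1 < j /\ j2 < j /\
    transfer_at adj s Ms v1 w j1 /\ transfer_at adj s Ms v2 w j2.

Definition debit (adj : rel V) (s : seq (V * V)) (Ms : {set {set V}}) (v w : V) :=
  exists j, transfer_at adj s Ms v w j /\ ~ canceled_at adj s Ms v w j.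

Definition degree1_endpoint (adj : rel V) (s : seq (V * V)) (Ms : {set {set V}})
    (i : nat) (u v : V) :=
  exists y w, (y = u \/ y = v) /\ debit adj s Ms y w /\ cdeg adj s i.+1 w = 1.

End OneTwoMinGreedy.

(* Main.v *)
Require Import Defs.
From mathcomp Require Import all_boot zify.
Set Implicit Arguments. Unset Strict Implicit. Unset Printing Implicit Defensive.

Section H.
Variable V : finType.

Lemma set2_eq (a b c d : V) : [set a; b] = [set c; d] ->
  (a = c /\ b = d) \/ (a = d /\ b = c).
Proof.
move=> E.
have ha : a \in [set c; d] by rewrite -E set21.
have hb : b \in [set c; d] by rewrite -E set22.
have hc : c \in [set a; b] by rewrite E set21.
have hd : d \in [set a; b] by rewrite E set22.
rewrite !inE in ha hb hc hd.
case/orP: ha => /eqP ha; case/orP: hb => /eqP hb; subst; try (by left); try (by right);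
  case/orP: hc => /eqP hc; case/orP: hd => /eqP hd; subst; auto.
Qed.

Definition inp (pr : V * V) (x : V) := (pr.1 == x) || (pr.2 == x).

Lemma covP (s : seq (V * V)) j x d :
  reflect (exists2 k, k < minn j (size s) & inp (nth d s k) x) (covered s j x).
Proof.
rewrite /covered; apply: (iffP (has_nthP d)).
  move=> [k]; rewrite size_take_min => hk; rewrite nth_take; last by lia.
  by exists k.
move=> [k hk h]; exists k; first by rewrite size_take_min.
by rewrite nth_take //; lia.
Qed.

Lemma covered_S (s : seq (V * V)) j x d : j < size s ->
  covered s j.+1 x = covered s j x || inp (nth d s j) x.
Proof. by move=> hj; rewrite /covered (take_nth d hj) has_rcons orbC. Qed.

Variable adj : rel V.

Lemma pair_disj s j1 j2 d x : is_run adj s -> j1 < j2 -> j2 < size s ->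
  inp (nth d s j1) x -> inp (nth d s j2) x -> False.
Proof.
move=> [Hs _] h12 h2 h1x h2x.
have := Hs j2 d h2; rewrite /step_ok => /andP [/and3P [_ c1 c2] _].
have cx : covered s j2 x by apply/(covP _ _ _ d); exists j1 => //; lia.
by case/orP: h2x => /eqP ex; [move: c1|move: c2]; rewrite ex cx.
Qed.

Lemma Mmem s (x y : V) d : [set x; y] \in matching_of s ->
  exists2 j, j < size s & [set x; y] = [set (nth d s j).1; (nth d s j).2].
Proof.
case/imsetP => pr prin E; exists (index pr s); first by rewrite index_mem.
by rewrite nth_index.
Qed.

Definition matchlike (N : {set {set V}}) :=
  forall x y z, [set x; y] \in N -> [set x; z] \in N -> y = z.

Lemma eq_set2r (x y z : V) : [set x; y] = [set x; z] -> y = z.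
Proof. by case/set2_eq => [[_ ->]|[-> ->]]. Qed.

Lemma M_matchlike s : is_run adj s -> matchlike (matching_of s).
Proof.
move=> Hr x y z /(Mmem (x,x)) [j1 hj1 E1] /(Mmem (x,x)) [j2 hj2 E2].
have i1 : inp (nth (x,x) s j1) x.
  by case: (set2_eq E1) => [[e _]|[e _]]; rewrite /inp -e eqxx ?orbT.
have i2 : inp (nth (x,x) s j2) x.
  by case: (set2_eq E2) => [[e _]|[e _]]; rewrite /inp -e eqxx ?orbT.
case: (ltngtP j1 j2) => h.
- by case: (pair_disj Hr h hj2 i1 i2).
- by case: (pair_disj Hr h hj1 i2 i1).
- by subst; apply: (@eq_set2r x); rewrite E1 E2.
Qed.

Lemma Ms_matchlike N : is_matching adj N -> matchlike N.
Proof.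
move=> [_ Hd] x y z hy hz.
case E: ([set x; y] == [set x; z]); first by apply: (@eq_set2r x); apply/eqP.
have := Hd _ _ hy hz (negbT E).
rewrite -setI_eq0 => /eqP h.
have : x \in [set x; y] :&: [set x; z] by rewrite inE !set21.
by rewrite h inE.
Qed.

Lemma edge_adj (N : {set {set V}}) (x y : V) : simple_graph adj -> N \subset edges adj ->
  [set x; y] \in N -> adj x y.
Proof.
move=> [sym _] /subsetP H /H; rewrite inE => /existsP [a /existsP [b /andP [hab /eqP E]]].
by case: (set2_eq E) => [[-> ->]|[-> ->]] //; rewrite sym.
Qed.

Section P.
Variables M Ms : {set {set V}}.

Lemma closure p a b : is_MMpath M Ms p -> a \in p -> hadj M Ms a b ->
  (b \in p) && ((index b p == (index a p).+1) || (index a p == (index b p).+1)).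
Proof.
case: p => // x r /and5P [_ _ _ _ /forallP H] ha hab.
by move: (H a) => /forallP /(_ b) /implyP; apply; rewrite ha hab.
Qed.

Lemma alt_nth b x r t d : alt M Ms b x r -> t < size r ->
  [set nth d (x :: r) t; nth d (x :: r) t.+1] \in (if b == ~~ odd t then Ms else M).
Proof.
elim: r b x t => [|y r IH] b x t; first by move=> _; rewrite ltn0.
move=> /= /andP [hxy ha].
case: t => [|t] /=; first by case: b hxy ha.
rewrite ltnS => ht; have := IH (~~ b) y t ha ht.
by case: b hxy ha; case: (odd t).
Qed.

Lemma edge_in x r t d : alt M Ms true x r -> t < size r ->
  [set nth d (x :: r) t; nth d (x :: r) t.+1] \in (if odd t then M else Ms).
Proof. by move=> h ht; have := alt_nth d h ht; case: (odd t). Qed.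

Lemma path_Msnbr p z : is_MMpath M Ms p -> z \in p ->
  exists2 a, a \in p & (a != z) && ([set z; a] \in Ms).
Proof.
case: p => // x r /and5P [hu hodd hsz halt _] hz.
have hk : index z (x :: r) < (size r).+1 by rewrite -[X in _ < X]/(size (x :: r)) index_mem.
have ez : nth z (x :: r) (index z (x :: r)) = z by rewrite nth_index.
move: hk ez; set k := index z (x :: r) => hk ez.
case ok: (odd k).
- case: k ok hk ez => [|k] // ok hk ez.
  have hk' : k < size r by lia.
  have := edge_in z halt hk'; rewrite /= in ok; rewrite (negbTE ok) => hin.
  exists (nth z (x :: r) k); first by apply: mem_nth => /=; lia.
  apply/andP; split; last by rewrite -{1}ez setUC.
  apply/negP => /eqP e; have : nth z (x :: r) k = nth z (x :: r) k.+1 by rewrite e ez.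
  by move/eqP; rewrite nth_uniq //=; lia.
- have hk' : k < size r.
    rewrite ltn_neqAle -ltnS hk andbT; apply/eqP => e; by rewrite e hodd in ok.
  have := edge_in z halt hk'; rewrite ok => hin.
  exists (nth z (x :: r) k.+1); first by apply: mem_nth => /=; lia.
  apply/andP; split; last by rewrite -{1}ez.
  apply/negP => /eqP e; have : nth z (x :: r) k = nth z (x :: r) k.+1 by rewrite e ez.
  by move/eqP; rewrite nth_uniq //=; lia.
Qed.

Lemma path_noMMs p a b : is_MMpath M Ms p -> matchlike M -> matchlike Ms ->
  a \in p -> [set a; b] \in M -> [set a; b] \in Ms -> False.
Proof.
move=> Hp HM HMs ha h1 h2.
have hab : hadj M Ms a b by rewrite /hadj inE h1.
have /andP [hb hidx] := closure Hp ha hab.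
case: p Hp ha hb hidx => // x r Hp ha hb hidx.
move: (Hp) => /and5P [hu hodd hsz halt _].
have core : forall t, t < size r ->
   [set nth x (x :: r) t; nth x (x :: r) t.+1] \in M ->
   [set nth x (x :: r) t; nth x (x :: r) t.+1] \in Ms -> False.
  move=> t ht m1 m2.
  have neq : forall i j, i < (size r).+1 -> j < (size r).+1 -> i != j ->
      nth x (x :: r) i = nth x (x :: r) j -> False.
    move=> i j hi hj hij e; move: hij; by rewrite -(@nth_uniq _ x (x :: r) i j hi hj hu) e eqxx.
  case ot: (odd t).
  - case: t ht m1 m2 ot => [|t] // ht m1 m2 ot.
    have := edge_in x halt (ltnW ht); rewrite /= in ot; rewrite (negbTE ot) setUC => m3.
    have := HMs _ _ _ m3 m2; move=> e; apply: (neq t t.+2 _ _ _ e); clear -ht; lia.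
  - case: (ltnP t.+1 (size r)) => ht2.
    + have := edge_in x halt ht2; rewrite -[odd t.+1]/(~~ odd t) ot => m3.
      rewrite setUC in m1; have := HM _ _ _ m1 m3; move=> e; apply: (neq t t.+2 _ _ _ e); clear -ht ht2; lia.
    + case: t ht m1 m2 ot ht2 => [|t] ht m1 m2 ot ht2; first by lia.
      have := edge_in x halt (ltnW ht); move: ot => /= /negbFE ot; rewrite ot setUC => m3.
      have := HM _ _ _ m3 m1; move=> e; apply: (neq t t.+2 _ _ _ e); clear -ht; lia.
have ia : index a (x :: r) < (size r).+1 by rewrite -[X in _ < X]/(size (x :: r)) index_mem.
have ib : index b (x :: r) < (size r).+1 by rewrite -[X in _ < X]/(size (x :: r)) index_mem.
case/orP: hidx => /eqP e.
- apply: (core (index a (x :: r))); first by clear -e ia ib; lia.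
  + by rewrite -e !nth_index.
  + by rewrite -e !nth_index.
- apply: (core (index b (x :: r))); first by clear -e ia ib; lia.
  + by rewrite -e !nth_index // setUC.
  + by rewrite -e !nth_index // setUC.
Qed.
End P.
End H.
Theorem lemma11 (V : finType) (adj : rel V) (s : seq (V * V))
    (Ms : {set {set V}}) (p : seq V) (i : nat) (u v : V) :
  simple_graph adj ->
  is_run adj s ->
  maximum_matching adj Ms ->
  (* each component of (V, M ∪ M* ) with an edge is an edge of M ∩ M*
     or an M-M*-path *)
  (forall x y, hadj (matching_of s) Ms x y ->
     [set x; y] \in matching_of s :&: Ms \/
     exists q, is_MMpath (matching_of s) Ms q /\ x \in q) ->
  (* X (node sequence p) is an M-M*-path created in step i, in which u
     (the selected node) is matched with v *)
  is_MMpath (matching_of s) Ms p ->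
  i < size s -> nth (u, v) s i = (u, v) ->
  u \in p -> v \in p ->
  (forall j d, j < i -> ~~ (((nth d s j).1 \in p) && ((nth d s j).2 \in p))) ->
  degree1_endpoint adj s Ms i u v ->
  exists u' v', i.+1 < size s /\ nth (u, v) s i.+1 = (u', v') /\
    ((u' \in p /\ ([set u; u'] \in Ms \/ [set v; u'] \in Ms)) \/
     (u' \notin p /\ ([set u; u'] \in Fedges adj (matching_of s) Ms \/
                      [set v; u'] \in Fedges adj (matching_of s) Ms))).
Proof.
move=> Hsg Hrun HmatMs _ Hp Hi Hnth Hu Hv Hearly [y0 [w [_ [_ Hw]]]].
have [sym irr] := Hsg.
have [[HMsE _] _] := HmatMs.
have Mml := M_matchlike Hrun.
have Msml := Ms_matchlike HmatMs.1.
have Hsz : i.+1 < size s.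
  have : 0 < cdeg adj s i.+1 w by rewrite Hw.
  rewrite /cdeg card_gt0 => /set0Pn [y1]; rewrite inE => hp.
  rewrite ltnNge; apply/negP => hle.
  have es : size s = i.+1 by clear -hle Hi; lia.
  by have := Hrun.2 w y1; rewrite es hp.
case E1: (nth (u,v) s i.+1) => [u' v'].
exists u', v'; split; first done; split; first done.
have := Hrun.1 i.+1 (u,v) Hsz; rewrite /step_ok E1 /= => /andP [hpres1 himp].
have hex : [exists w, 0 < cdeg adj s i.+1 w < 3] by apply/existsP; exists w; rewrite Hw.
move: himp; rewrite hex /= => /andP [hpos /forallP hmin].
have hdu' : cdeg adj s i.+1 u' = 1.
  by have := hmin w; rewrite Hw /=; clear -hpos; lia.
have := Hrun.1 i (u,v) Hi; rewrite /step_ok Hnth /= => /andP [hpres0 himp0].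
have covS x : covered s i.+1 x = covered s i x || inp (u,v) x.
  by rewrite (covered_S x (u,v) Hi) Hnth.
move: (hpres1) => /and3P [adju'v' ncu' ncv'].
move: (ncu'); rewrite covS negb_or => /andP [ncu'0 ninu'].
have Unc a : a \in p -> ~~ covered s i a.
  move=> ha; apply/negP => /(covP _ _ _ (u,v)) [k hk hin].
  have hk1 : k < i by clear -hk; lia.
  have hk2 : k < size s by clear -hk; lia.
  have := Hearly k (u,v) hk1; set pr := nth (u,v) s k => hnot.
  have hM : [set pr.1; pr.2] \in matching_of s.
    by apply/imsetP; exists pr => //; exact: mem_nth.
  case/orP: hin => /eqP ea.
  - have hh : hadj (matching_of s) Ms a pr.2 by rewrite /hadj inE -ea hM.
    have /andP [h2 _] := closure Hp ha hh.
    by move: hnot; rewrite ea ha h2.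
  - have hh : hadj (matching_of s) Ms a pr.1 by rewrite /hadj inE -ea setUC hM.
    have /andP [h2 _] := closure Hp ha hh.
    by move: hnot; rewrite ea ha h2.
have huvM : [set u; v] \in matching_of s.
  by apply/imsetP; exists (u,v) => //; rewrite -Hnth mem_nth.
have [a ha /andP [anu hua]] := path_Msnbr Hp Hu.
have anv : a != v.
  by apply/eqP => eav; subst a; apply: (path_noMMs Hp Mml Msml Hu huvM hua).
have adjua : adj u a := edge_adj Hsg HMsE hua.
have hdeg : 2 <= cdeg adj s i u.
  have : [set v; a] \subset [set y | present adj s i u y].
    apply/subsetP => z; rewrite !inE => /orP [] /eqP ->; first done.
    move: hpres0 => /and3P [_ cu _].
    by rewrite /present adjua cu Unc.
  by move/subset_leq_card; rewrite cards2 eq_sym anv.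
have no1 z : cdeg adj s i z != 1.
  apply/eqP=> hz.
  have hex0 : [exists w, 0 < cdeg adj s i w < 3] by apply/existsP; exists z; rewrite hz.
  move: himp0; rewrite hex0 /= => /andP [_ /forallP /(_ z)]; rewrite hz /= => h.
  by clear -h hdeg; lia.
have F2 : adj u' u || adj u' v.
  apply: contraT => /norP [nu nv].
  have : cdeg adj s i u' = cdeg adj s i.+1 u'.
    rewrite /cdeg; apply: eq_card => z; rewrite !inE /present !covS.
    rewrite (negbTE ninu') orbF.
    case: (boolP (adj u' z)) => //= haz.
    have hzu : (u == z) = false by apply/eqP => e; move: nu; rewrite e haz.
    have hzv : (v == z) = false by apply/eqP => e; move: nv; rewrite e haz.
    by rewrite /inp /= hzu hzv !orbF.
  by rewrite hdu'; move/eqP; rewrite (negbTE (no1 u')).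
have [y hy adjy] : exists2 y, (y = u) \/ (y = v) & adj y u'.
  by case/orP: F2 => h; [exists u; [left|rewrite sym] | exists v; [right|rewrite sym]].
have hE : [set y; u'] \in edges adj.
  by rewrite inE; apply/existsP; exists y; apply/existsP; exists u'; rewrite adjy eqxx.
have yp : y \in p by case: hy => ->.
have yin : inp (u,v) y by case: hy => ->; rewrite /inp /= eqxx ?orbT.
case hMs : ([set y; u'] \in Ms).
  have hh : hadj (matching_of s) Ms y u' by rewrite /hadj inE hMs orbT.
  have /andP [hup _] := closure Hp yp hh.
  by left; split => //; case: hy => e; subst y; [left|right].
case hM : ([set y; u'] \in matching_of s).
  exfalso; have [j hj Ej] := Mmem (u,v) hM.
  have iy : inp (nth (u,v) s j) y.
    by case: (set2_eq Ej) => [[e _]|[e _]]; rewrite /inp -e eqxx ?orbT.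
  have iu' : inp (nth (u,v) s j) u'.
    by case: (set2_eq Ej) => [[_ e]|[_ e]]; rewrite /inp -e eqxx ?orbT.
  case: (ltnP i j) => hij.
    by apply: (pair_disj Hrun hij hj _ iy); rewrite Hnth.
  have : covered s i.+1 u' by apply/(covP _ _ _ (u,v)); exists j => //; clear -hij hj; lia.
  by rewrite (negbTE ncu').
have hF : [set y; u'] \in Fedges adj (matching_of s) Ms.
  by rewrite /Fedges in_setD in_setU hM hMs hE.
case hup : (u' \in p); last first.
  by right; split => //; case: hy => e; subst y; [left|right].
case hMs2 : (([set u; u'] \in Ms) || ([set v; u'] \in Ms)).
  by left; split => //; case/orP: hMs2; [left|right].
exfalso.
have [b hb /andP [bnu' hu'b]] := path_Msnbr Hp hup.
move: hMs2 => /norP [nMu nMv].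
have bnu : b != u by apply/eqP => e; move: nMu; rewrite -e setUC hu'b.
have bnv : b != v by apply/eqP => e; move: nMv; rewrite -e setUC hu'b.
have adjub : adj u' b := edge_adj Hsg HMsE hu'b.
have pb : present adj s i.+1 u' b.
  rewrite /present adjub ncu' covS negb_or Unc //=.
  by rewrite /inp /= negb_or !(eq_sym _ b) bnu bnv.
have /cards1P [z0 Ez] : #|[set y | present adj s i.+1 u' y]| == 1 by rewrite -/(cdeg _ _ _ _) hdu'.
have eb : b = z0 by apply/set1P; rewrite -Ez inE.
have ev : v' = z0 by apply/set1P; rewrite -Ez inE.
have hMv' : [set u'; v'] \in matching_of s.
  by apply/imsetP; exists (u',v') => //; rewrite -E1 mem_nth.
apply: (path_noMMs Hp Mml Msml hup hMv').
by rewrite ev -eb.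
Qed.
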